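(* Fix $\epsilon_2>0$ and $(u_\pm,v_\pm)$ with $v_\pm>0$ and $u_-<u_+$. For small $\epsilon_1>0$ let $(u^{\epsilon_1\epsilon_2},v^{\epsilon_1\epsilon_2})$ be the two-rarefaction-wave Riemann solution of the perturbed Brio system with data $(u_\pm,v_\pm)$. Then as $\epsilon_1\to0$ the solution converges to the Riemann solution of $u_t+(\tfrac12u^2)_x=0$, $v_t+(uv-\epsilon_2v)_x=0$ consisting of a contact discontinuity $x/t=u_--\epsilon_2$ followed by a rarefaction wave, with intermediate state $(u_*^{\epsilon_2},v_*^{\epsilon_2})=\big(u_-,\,v_+\exp(\tfrac{u_--u_+}{\epsilon_2})\big)$; explicitly, with $\xi=x/t$: $(u_-,v_-)$ for $\xi<u_--\epsilon_2$; $(u_-,v_*^{\epsilon_2})$ for $u_--\epsilon_2<\xi<u_-$; $\big(\xi,\,v_*^{\epsilon_2}\exp(\tfrac{\xi-u_-}{\epsilon_2})\big)$ for $u_-\le\xi\le u_+$; $(u_+,v_+)$ for $\xi>u_+$.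
   Context: Perturbed Brio system: $u_t+(\tfrac12u^2+\tfrac12\epsilon_1v^2)_x=0$, $v_t+(uv-\epsilon_2v)_x=0$, $\epsilon_1,\epsilon_2>0$, $v>0$, with Riemann data $(u_-,v_-)$ for $x<0$, $(u_+,v_+)$ for $x>0$. With $s(v)=\sqrt{\epsilon_2^2+4\epsilon_1v^2}$ and $\lambda_{1,2}=u-\tfrac12\epsilon_2\mp\tfrac12s(v)$, the two-rarefaction-wave solution has an intermediate state $(u_*,v_* )$ lying on the backward rarefaction curve $u-\tfrac12(-s(v)+\epsilon_2\ln(s(v)+\epsilon_2))=u_--\tfrac12(-s(v_-)+\epsilon_2\ln(s(v_-)+\epsilon_2))$, $v<v_-$, with $(u_+,v_+)$ on the forward rarefaction curve $u-\tfrac12(s(v)+\epsilon_2\ln(s(v)-\epsilon_2))=u_*-\tfrac12(s(v_* )+\epsilon_2\ln(s(v_* )-\epsilon_2))$, $v>v_*$; the solution consists of $(u_-,v_-)$, a 1-fan with $x/t=\lambda_1$, the state $(u_*,v_* )$, a 2-fan with $x/t=\lambda_2$, and $(u_+,v_+)$. *)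

(* Defs.v *)
From Stdlib Require Import Reals Lra.
Open Scope R_scope.

Definition sfun (e1 e2 v : R) : R := sqrt (e2 ^ 2 + 4 * e1 * v ^ 2).

Definition lam1 (e1 e2 u v : R) : R := u - e2 / 2 - sfun e1 e2 v / 2.
Definition lam2 (e1 e2 u v : R) : R := u - e2 / 2 + sfun e1 e2 v / 2.

(* Riemann invariants defining the backward (1-) and forward (2-) rarefaction curves *)
Definition Rinv1 (e1 e2 u v : R) : R :=
  u - (1/2) * (- sfun e1 e2 v + e2 * ln (sfun e1 e2 v + e2)).
Definition Rinv2 (e1 e2 u v : R) : R :=
  u - (1/2) * (sfun e1 e2 v + e2 * ln (sfun e1 e2 v - e2)).

(* W xi = value of the self-similar two-rarefaction-wave Riemann solution at
   xi = x/t, with intermediate state (us, vs). *)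
Definition two_rarefaction_solution (e1 e2 um vm up vp us vs : R)
    (W : R -> R * R) : Prop :=
  0 < vs /\ vs < vm /\ Rinv1 e1 e2 us vs = Rinv1 e1 e2 um vm /\
  vs < vp /\ Rinv2 e1 e2 up vp = Rinv2 e1 e2 us vs /\
  forall xi : R,
    (xi < lam1 e1 e2 um vm -> W xi = (um, vm)) /\
    (lam1 e1 e2 um vm <= xi <= lam1 e1 e2 us vs ->
       vs <= snd (W xi) <= vm /\
       Rinv1 e1 e2 (fst (W xi)) (snd (W xi)) = Rinv1 e1 e2 um vm /\
       lam1 e1 e2 (fst (W xi)) (snd (W xi)) = xi) /\
    (lam1 e1 e2 us vs < xi < lam2 e1 e2 us vs -> W xi = (us, vs)) /\
    (lam2 e1 e2 us vs <= xi <= lam2 e1 e2 up vp ->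
       vs <= snd (W xi) <= vp /\
       Rinv2 e1 e2 (fst (W xi)) (snd (W xi)) = Rinv2 e1 e2 us vs /\
       lam2 e1 e2 (fst (W xi)) (snd (W xi)) = xi) /\
    (lam2 e1 e2 up vp < xi -> W xi = (up, vp)).

Definition limit_solution (e2 um vm up vp xi : R) : R * R :=
  let vs := vp * exp ((um - up) / e2) in
  if Rlt_dec xi (um - e2) then (um, vm)
  else if Rlt_dec xi um then (um, vs)
  else if Rle_dec xi up then (xi, vs * exp ((xi - um) / e2))
  else (up, vp).

(* Main.v *)
Require Import Defs.
From Stdlib Require Import Reals Lra.
Open Scope R_scope.

Lemma ln_le_xm1 x : 0 < x -> ln x <= x - 1.
Proof. intro H. pose proof (exp_ineq1_le (ln x)). rewrite exp_ln in H0; lra. Qed.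

Lemma ln_diff a b c : 0 < c -> c <= a -> c <= b -> Rabs (ln a - ln b) <= Rabs (a - b) / c.
Proof.
  intros Hc Ha Hb.
  assert (K: forall a b, c <= a -> c <= b -> ln a - ln b <= Rabs (a - b) / c).
  { clear a b Ha Hb. intros a b Ha Hb.
    assert (E: ln a = ln b + ln (a / b)).
    { rewrite <- ln_mult by (try apply Rdiv_lt_0_compat; lra). f_equal. field. lra. }
    rewrite E. pose proof (ln_le_xm1 (a/b)) as L.
    assert (0 < a/b) by (apply Rdiv_lt_0_compat; lra).
    specialize (L H).
    assert (a / b - 1 = (a - b) / b) by (field; lra).
    assert ((a - b)/b <= Rabs (a-b) / c).
    { unfold Rdiv. apply Rle_trans with (Rabs (a-b) * / b).
      apply Rmult_le_compat_r. left; apply Rinv_0_lt_compat; lra. apply Rle_abs.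
      apply Rmult_le_compat_l. apply Rabs_pos. apply Rinv_le_contravar; lra. }
    lra. }
  unfold Rabs at 1. destruct (Rcase_abs (ln a - ln b)).
  - pose proof (K b a Hb Ha). rewrite Rabs_minus_sym in H. lra.
  - apply K; lra.
Qed.

Lemma exp_near1 t : Rabs t <= 1/2 -> Rabs (exp t - 1) <= 2 * Rabs t.
Proof.
  intro H. pose proof (exp_ineq1_le t). pose proof (exp_ineq1_le (-t)).
  rewrite exp_Ropp in H1. pose proof (exp_pos t).
  assert (Ht: -1/2 <= t <= 1/2) by (unfold Rabs in H; destruct (Rcase_abs t); lra).
  assert (exp t * (1 - t) <= 1).
  { apply Rmult_le_reg_r with (/ exp t). apply Rinv_0_lt_compat; lra.
    rewrite Rmult_comm, <- Rmult_assoc, Rinv_l by lra. lra. }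
  unfold Rabs; destruct (Rcase_abs (exp t - 1)), (Rcase_abs t); nra.
Qed.

Lemma s_ge e1 e2 v : 0 < e2 -> 0 <= e1 -> e2 <= sfun e1 e2 v.
Proof.
  intros. unfold sfun. rewrite <- (sqrt_pow2 e2) at 1 by lra.
  apply sqrt_le_1_alt. nra.
Qed.

Lemma s_le e1 e2 v M : 0 < e2 -> 0 <= e1 -> v^2 <= M^2 ->
  sfun e1 e2 v <= e2 + 2 * e1 * M^2 / e2.
Proof.
  intros. unfold sfun.
  assert (0 <= 2 * e1 * M ^ 2 / e2).
  { unfold Rdiv. apply Rmult_le_pos. nra. left; apply Rinv_0_lt_compat; lra. }
  rewrite <- (sqrt_pow2 (e2 + 2 * e1 * M ^ 2 / e2)) by lra.
  apply sqrt_le_1_alt.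
  replace ((e2 + 2 * e1 * M ^ 2 / e2) ^ 2) with
    (e2^2 + 4 * e1 * M^2 + (2 * e1 * M ^ 2 / e2)^2) by (field; lra).
  nra.
Qed.

Lemma s_sq e1 e2 v : 0 <= e1 -> sfun e1 e2 v * sfun e1 e2 v = e2^2 + 4*e1*v^2.
Proof. intros. unfold sfun. apply sqrt_sqrt. nra. Qed.

Lemma ln_sm e1 e2 v : 0 < e1 -> 0 < e2 -> 0 < v ->
  ln (sfun e1 e2 v - e2) = ln (4 * e1) + 2 * ln v - ln (sfun e1 e2 v + e2).
Proof.
  intros. pose proof (s_ge e1 e2 v H0 (Rlt_le _ _ H)). pose proof (s_sq e1 e2 v (Rlt_le _ _ H)).
  set (s := sfun e1 e2 v) in *.
  assert (E: s - e2 = (4 * e1) * (v * v) * / (s + e2)) by (field_simplify_eq; nra).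
  rewrite E. 
  assert (0 < / (s + e2)) by (apply Rinv_0_lt_compat; lra).
  rewrite !ln_mult by (try apply Rmult_lt_0_compat; nra).
  rewrite ln_Rinv by lra. lra.
Qed.

Lemma sdiff e1 e2 v w M : 0 < e2 -> 0 <= e1 -> v^2 <= M^2 -> w^2 <= M^2 ->
  Rabs (sfun e1 e2 v - sfun e1 e2 w) <= 2 * e1 * M^2 / e2.
Proof.
  intros. pose proof (s_ge e1 e2 v H H0). pose proof (s_ge e1 e2 w H H0).
  pose proof (s_le e1 e2 v M H H0 H1). pose proof (s_le e1 e2 w M H H0 H2).
  unfold Rabs; destruct (Rcase_abs _); lra.
Qed.

Lemma lndiff e1 e2 v w M : 0 < e2 -> 0 <= e1 -> v^2 <= M^2 -> w^2 <= M^2 ->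
  Rabs (ln (sfun e1 e2 v + e2) - ln (sfun e1 e2 w + e2)) <= (2 * e1 * M^2 / e2) / (2*e2).
Proof.
  intros. pose proof (s_ge e1 e2 v H H0). pose proof (s_ge e1 e2 w H H0).
  eapply Rle_trans. apply ln_diff with (c := 2*e2); lra.
  unfold Rdiv. apply Rmult_le_compat_r. left; apply Rinv_0_lt_compat; lra.
  replace (sfun e1 e2 v + e2 - (sfun e1 e2 w + e2)) with (sfun e1 e2 v - sfun e1 e2 w) by ring.
  apply sdiff; auto.
Qed.

Lemma R1est e1 e2 u v u' w M : 0 < e2 -> 0 <= e1 -> v^2 <= M^2 -> w^2 <= M^2 ->
  Rinv1 e1 e2 u v = Rinv1 e1 e2 u' w -> Rabs (u - u') <= 2 * e1 * M^2 / e2.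
Proof.
  intros. unfold Rinv1 in H3.
  pose proof (sdiff e1 e2 v w M H H0 H1 H2). pose proof (lndiff e1 e2 v w M H H0 H1 H2).
  set (d := 2 * e1 * M ^ 2 / e2) in *.
  assert (0 <= d) by (apply Rle_trans with (Rabs (sfun e1 e2 v - sfun e1 e2 w)); auto; apply Rabs_pos).
  assert (E: u - u' = (1/2) * (- (sfun e1 e2 v - sfun e1 e2 w)) + (e2/2) *
     (ln (sfun e1 e2 v + e2) - ln (sfun e1 e2 w + e2))) by lra.
  rewrite E. eapply Rle_trans. apply Rabs_triang.
  rewrite !Rabs_mult, Rabs_Ropp, (Rabs_pos_eq (1/2)), (Rabs_pos_eq (e2/2)) by lra.
  assert (e2/2 * Rabs (ln (sfun e1 e2 v + e2) - ln (sfun e1 e2 w + e2)) <= e2/2 * (d/(2*e2))).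
  { apply Rmult_le_compat_l; lra. }
  replace (e2/2 * (d/(2*e2))) with (d/4) in H7 by (field; lra). lra.
Qed.

Lemma R2est e1 e2 u v u' w M : 0 < e2 -> 0 < e1 -> 0 < v -> 0 < w -> v^2 <= M^2 -> w^2 <= M^2 ->
  Rinv2 e1 e2 u v = Rinv2 e1 e2 u' w ->
  Rabs (e2 * ln v - e2 * ln w - (u - u')) <= 2 * e1 * M^2 / e2.
Proof.
  intros. unfold Rinv2 in H5. rewrite !ln_sm in H5 by lra.
  pose proof (sdiff e1 e2 v w M H (Rlt_le _ _ H0) H3 H4).
  pose proof (lndiff e1 e2 v w M H (Rlt_le _ _ H0) H3 H4).
  set (d := 2 * e1 * M ^ 2 / e2) in *.
  assert (0 <= d) by (apply Rle_trans with (Rabs (sfun e1 e2 v - sfun e1 e2 w)); auto; apply Rabs_pos).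
  assert (E: e2 * ln v - e2 * ln w - (u - u') = (1/2) * (- (sfun e1 e2 v - sfun e1 e2 w)) + (e2/2) *
     (ln (sfun e1 e2 v + e2) - ln (sfun e1 e2 w + e2))) by lra.
  rewrite E. eapply Rle_trans. apply Rabs_triang.
  rewrite !Rabs_mult, Rabs_Ropp, (Rabs_pos_eq (1/2)), (Rabs_pos_eq (e2/2)) by lra.
  assert (e2/2 * Rabs (ln (sfun e1 e2 v + e2) - ln (sfun e1 e2 w + e2)) <= e2/2 * (d/(2*e2))).
  { apply Rmult_le_compat_l; lra. }
  replace (e2/2 * (d/(2*e2))) with (d/4) in H9 by (field; lra). lra.
Qed.

Lemma Vest e2 vp v u up a d k : 0 < e2 -> 0 < vp -> 0 < v -> a <= up ->
  Rabs (e2 * ln v - e2 * ln vp - (u - up)) <= d -> Rabs (u - a) <= k -> (d + k) / e2 <= 1/2 ->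
  Rabs (v - vp * exp ((a - up) / e2)) <= 2 * vp * ((d + k) / e2).
Proof.
  intros. set (r := e2 * ln v - e2 * ln vp - (u - up)) in *.
  assert (Ev: v = vp * exp ((a - up)/e2) * exp ((u - a + r)/e2)).
  { rewrite Rmult_assoc, <- exp_plus.
    replace ((a - up) / e2 + (u - a + r) / e2) with (ln v + - ln vp) by (unfold r; field; lra).
    rewrite exp_plus, exp_Ropp, !exp_ln by lra. field; lra. }
  assert (Ht: Rabs ((u - a + r)/e2) <= (d+k)/e2).
  { unfold Rdiv. rewrite Rabs_mult, (Rabs_pos_eq (/e2)) by (left; apply Rinv_0_lt_compat; lra).
    apply Rmult_le_compat_r. left; apply Rinv_0_lt_compat; lra.
    replace (u - a + r) with ((u - a) + r) by ring. eapply Rle_trans. apply Rabs_triang. lra. }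
  pose proof (exp_near1 ((u - a + r)/e2) ltac:(lra)).
  assert (0 < exp ((a - up)/e2) <= 1).
  { split. apply exp_pos. rewrite <- exp_0.
    assert ((a - up)/e2 <= 0).
    { unfold Rdiv. assert (0 < / e2) by (apply Rinv_0_lt_compat; lra). nra. }
    destruct H7. left; apply exp_increasing; auto. rewrite H7; lra. }
  rewrite Ev. set (E := exp ((a - up) / e2)) in *. set (t := (u - a + r) / e2) in *.
  replace (vp * E * exp t - vp * E) with ((vp * E) * (exp t - 1)) by ring.
  rewrite Rabs_mult, Rabs_pos_eq by nra.
  assert (0 <= Rabs (exp t - 1)) by apply Rabs_pos.
  apply Rle_trans with (vp * 1 * Rabs (exp t - 1)).
  apply Rmult_le_compat_r; nra. nra.
Qed.

Theorem theorem6p2 (e2 um vm up vp : R) :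
  0 < e2 -> 0 < vm -> 0 < vp -> um < up ->
  forall (delta : R) (us vs : R -> R) (W : R -> R -> R * R),
    0 < delta ->
    (forall e1, 0 < e1 < delta ->
       two_rarefaction_solution e1 e2 um vm up vp (us e1) (vs e1) (W e1)) ->
    forall xi : R, xi <> um - e2 ->
      limit1_in (fun e1 => fst (W e1 xi)) (fun e1 => 0 < e1 < delta)
                (fst (limit_solution e2 um vm up vp xi)) 0 /\
      limit1_in (fun e1 => snd (W e1 xi)) (fun e1 => 0 < e1 < delta)
                (snd (limit_solution e2 um vm up vp xi)) 0.
Proof.
  intros He2 Hvm Hvp Hup delta us vs W Hdel HW xi Hxi.
  set (M := Rmax vm vp).
  assert (HMm : vm <= M) by apply Rmax_l. assert (HMp : vp <= M) by apply Rmax_r.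
  assert (Hvm2 : vm^2 <= M^2) by nra. assert (Hvp2 : vp^2 <= M^2) by nra.
  set (c := 2 * M^2 / e2).
  assert (Hc : 0 < c) by (unfold c; apply Rdiv_lt_0_compat; nra).
  set (L := limit_solution e2 um vm up vp xi).
  assert (Key: forall eps, 0 < eps -> exists eta, 0 < eta /\ forall e1, 0 < e1 < delta ->
     c * e1 < eta -> Rabs (fst (W e1 xi) - fst L) < eps /\ Rabs (snd (W e1 xi) - snd L) < eps).
  { intros eps Heps.
    destruct (Rtotal_order xi (um - e2)) as [C1|[C1|C1]]; [|contradiction|].
    - exists (um - e2 - xi). split; [lra|]. intros e1 He1 Hce.
      destruct (HW e1 He1) as (Hvs0 & Hvsm & HR1 & Hvsp & HR2 & Hreg).
      destruct (Hreg xi) as (G1 & G2 & G3 & G4 & G5).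
      assert (Ed : 2 * e1 * M^2 / e2 = c * e1) by (unfold c; field; lra).
      pose proof (s_le e1 e2 vm M He2 (Rlt_le _ _ (proj1 He1)) Hvm2).
      rewrite G1. 2: { unfold lam1. lra. }
      unfold L, limit_solution. destruct (Rlt_dec xi (um - e2)); [|lra]. simpl.
      rewrite !Rminus_diag, Rabs_R0. lra.
    - destruct (Rlt_le_dec xi um) as [C2|C2].
      + exists (Rmin (Rmin (xi - um + e2) (um - xi)) (Rmin eps (Rmin (e2/4) (eps*e2/(4*vp))))).
        split.
        { repeat apply Rmin_pos; try lra. apply Rdiv_lt_0_compat; nra. }
        intros e1 He1 Hce.
        pose proof (Rmin_l (Rmin (xi - um + e2) (um - xi)) (Rmin eps (Rmin (e2/4) (eps*e2/(4*vp))))).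
        pose proof (Rmin_r (Rmin (xi - um + e2) (um - xi)) (Rmin eps (Rmin (e2/4) (eps*e2/(4*vp))))).
        pose proof (Rmin_l (xi - um + e2) (um - xi)). pose proof (Rmin_r (xi - um + e2) (um - xi)).
        pose proof (Rmin_l eps (Rmin (e2/4) (eps*e2/(4*vp)))).
        pose proof (Rmin_r eps (Rmin (e2/4) (eps*e2/(4*vp)))).
        pose proof (Rmin_l (e2/4) (eps*e2/(4*vp))). pose proof (Rmin_r (e2/4) (eps*e2/(4*vp))).
        set (eta := Rmin _ _) in *.
        destruct (HW e1 He1) as (Hvs0 & Hvsm & HR1 & Hvsp & HR2 & Hreg).
        destruct (Hreg xi) as (G1 & G2 & G3 & G4 & G5).
        assert (Ed : 2 * e1 * M^2 / e2 = c * e1) by (unfold c; field; lra).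
        assert (Hvs2 : vs e1 ^ 2 <= M ^ 2) by nra.
        pose proof (R1est e1 e2 (us e1) (vs e1) um vm M He2 (Rlt_le _ _ (proj1 He1)) Hvs2 Hvm2 HR1) as E1.
        pose proof (R2est e1 e2 (us e1) (vs e1) up vp M He2 (proj1 He1) Hvs0 Hvp Hvs2 Hvp2 (eq_sym HR2)) as E2.
        rewrite Ed in E1, E2.
        pose proof (s_ge e1 e2 (vs e1) He2 (Rlt_le _ _ (proj1 He1))).
        assert (Hu1 : us e1 - um <= c * e1) by (pose proof (Rle_abs (us e1 - um)); lra).
        assert (Hu2 : um - us e1 <= c * e1) by (rewrite Rabs_minus_sym in E1; pose proof (Rle_abs (um - us e1)); lra).
        rewrite G3. 2: { unfold lam1, lam2. lra. }
        unfold L, limit_solution. destruct (Rlt_dec xi (um - e2)); [lra|].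
        destruct (Rlt_dec xi um); [|lra]. simpl. split; [lra|].
        assert (Hk: Rabs (us e1 - um) <= c * e1) by lra.
        assert (HV := Vest e2 vp (vs e1) (us e1) up um (c*e1) (c*e1) He2 Hvp Hvs0 (Rlt_le _ _ Hup) E2 Hk).
        assert (Hq : (c * e1 + c * e1) / e2 <= 1/2).
        { apply Rmult_le_reg_r with e2; auto. unfold Rdiv. rewrite Rmult_assoc, Rinv_l by lra. lra. }
        specialize (HV Hq). eapply Rle_lt_trans. apply HV.
        apply Rmult_lt_reg_r with e2; auto. unfold Rdiv. rewrite !Rmult_assoc, Rinv_l by lra.
        assert (c * e1 < eps * e2 / (4 * vp)) by lra.
        assert (c * e1 * (4 * vp) < eps * e2).
        { apply Rmult_lt_reg_r with (/ (4 * vp)). apply Rinv_0_lt_compat; lra.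
          rewrite Rmult_assoc, Rinv_r by lra. lra. }
        lra.
      + destruct (Rle_lt_dec xi up) as [C3|C3].
          exists (Rmin eps (Rmin (e2/4) (eps*e2/(4*vp)))).
          split.
          { repeat apply Rmin_pos; try lra. apply Rdiv_lt_0_compat; nra. }
          intros e1 He1 Hce.
          pose proof (Rmin_l eps (Rmin (e2/4) (eps*e2/(4*vp)))).
          pose proof (Rmin_r eps (Rmin (e2/4) (eps*e2/(4*vp)))).
          pose proof (Rmin_l (e2/4) (eps*e2/(4*vp))). pose proof (Rmin_r (e2/4) (eps*e2/(4*vp))).
          set (eta := Rmin _ _) in *.
          destruct (HW e1 He1) as (Hvs0 & Hvsm & HR1 & Hvsp & HR2 & Hreg).
          destruct (Hreg xi) as (G1 & G2 & G3 & G4 & G5).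
          assert (Ed : 2 * e1 * M^2 / e2 = c * e1) by (unfold c; field; lra).
          assert (Hvs2 : vs e1 ^ 2 <= M ^ 2) by nra.
          pose proof (R1est e1 e2 (us e1) (vs e1) um vm M He2 (Rlt_le _ _ (proj1 He1)) Hvs2 Hvm2 HR1) as E1.
          rewrite Ed in E1.
          pose proof (s_ge e1 e2 (vs e1) He2 (Rlt_le _ _ (proj1 He1))).
          pose proof (s_le e1 e2 (vs e1) M He2 (Rlt_le _ _ (proj1 He1)) Hvs2).
          pose proof (s_ge e1 e2 vp He2 (Rlt_le _ _ (proj1 He1))).
          assert (Hu1 : us e1 - um <= c * e1) by (pose proof (Rle_abs (us e1 - um)); lra).
          assert (Hu2 : um - us e1 <= c * e1) by (rewrite Rabs_minus_sym in E1; pose proof (Rle_abs (um - us e1)); lra).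
          assert (Ex : exists u v, W e1 xi = (u, v) /\ 0 < v /\ v^2 <= M^2 /\
                     Rinv2 e1 e2 u v = Rinv2 e1 e2 up vp /\ Rabs (u - xi) <= c * e1).
          { destruct (Rlt_le_dec xi (lam2 e1 e2 (us e1) (vs e1))) as [D|D].
            - exists (us e1), (vs e1). split. apply G3. unfold lam1; split; lra.
              split; [lra|]. split; [lra|]. split; [auto|].
              unfold lam2 in D. unfold Rabs; destruct (Rcase_abs _); lra.
            - destruct G4 as (B1 & B2 & B3). split; auto. unfold lam2. lra.
              exists (fst (W e1 xi)), (snd (W e1 xi)). split. apply surjective_pairing.
              split; [lra|]. split; [nra|]. split; [congruence|].
              assert (Hv2 : snd (W e1 xi) ^ 2 <= M ^ 2) by nra.
              pose proof (s_ge e1 e2 (snd (W e1 xi)) He2 (Rlt_le _ _ (proj1 He1))).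
              pose proof (s_le e1 e2 (snd (W e1 xi)) M He2 (Rlt_le _ _ (proj1 He1)) Hv2).
              unfold lam2 in B3. unfold Rabs; destruct (Rcase_abs _); lra. }
          destruct Ex as (u & v & Ew & Hv0 & Hv2 & Hinv & Hux).
          pose proof (R2est e1 e2 u v up vp M He2 (proj1 He1) Hv0 Hvp Hv2 Hvp2 Hinv) as E2.
          rewrite Ed in E2.
          rewrite Ew.
          unfold L, limit_solution. destruct (Rlt_dec xi (um - e2)); [lra|].
          destruct (Rlt_dec xi um); [lra|]. destruct (Rle_dec xi up); [|lra]. simpl. split; [lra|].
          rewrite Rmult_assoc, <- exp_plus.
          replace ((um - up) / e2 + (xi - um) / e2) with ((xi - up) / e2) by (field; lra).
          assert (HV := Vest e2 vp v u up xi (c*e1) (c*e1) He2 Hvp Hv0 C3 E2 Hux).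
          assert (Hq : (c * e1 + c * e1) / e2 <= 1/2).
          { apply Rmult_le_reg_r with e2; auto. unfold Rdiv. rewrite Rmult_assoc, Rinv_l by lra. lra. }
          specialize (HV Hq). eapply Rle_lt_trans. apply HV.
          apply Rmult_lt_reg_r with e2; auto. unfold Rdiv. rewrite !Rmult_assoc, Rinv_l by lra.
          assert (c * e1 < eps * e2 / (4 * vp)) by lra.
          assert (c * e1 * (4 * vp) < eps * e2).
          { apply Rmult_lt_reg_r with (/ (4 * vp)). apply Rinv_0_lt_compat; lra.
            rewrite Rmult_assoc, Rinv_r by lra. lra. }
          lra.
        * exists (xi - up). split; [lra|]. intros e1 He1 Hce.
          destruct (HW e1 He1) as (Hvs0 & Hvsm & HR1 & Hvsp & HR2 & Hreg).
          destruct (Hreg xi) as (G1 & G2 & G3 & G4 & G5).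
          assert (Ed : 2 * e1 * M^2 / e2 = c * e1) by (unfold c; field; lra).
          pose proof (s_le e1 e2 vp M He2 (Rlt_le _ _ (proj1 He1)) Hvp2).
          rewrite G5. 2: { unfold lam2. lra. }
          unfold L, limit_solution. destruct (Rlt_dec xi (um - e2)); [lra|].
          destruct (Rlt_dec xi um); [lra|]. destruct (Rle_dec xi up); [lra|]. simpl.
          rewrite !Rminus_diag, Rabs_R0. lra. }
  split; unfold limit1_in, limit_in; intros eps Heps; destruct (Key eps Heps) as [eta [Heta K]];
    exists (eta / c); (split; [apply Rdiv_lt_0_compat; lra|]);
    intros x [Dx Hx]; simpl in Hx |- *; unfold R_dist in Hx |- *;
    rewrite Rminus_0_r, Rabs_pos_eq in Hx by lra;
    (assert (c * x < eta) by (apply Rmult_lt_reg_r with (/c); [apply Rinv_0_lt_compat; lra|];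
       rewrite Rmult_comm, <- Rmult_assoc, Rinv_l by lra; lra));
    apply (K x Dx H).
Qed.
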